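(* Let $G$ be a finite abelian group and $S\subseteq G$ an interval of $G$. Then $\mathrm{sh}_G(S)\le 2$.
   Context: Shape parameter: for a finite abelian group $G$ (written multiplicatively), $G^\vee=\mathrm{Hom}(G,\mathbb C^* )$ with trivial character $\chi_0$. For $f=\sum_{g\in G}c_g g\in\mathbb C[G]$ and $\chi\in G^\vee$ put $f_\chi=\sum_g c_g\chi(g^{-1})$. For $S\subseteq G$ let $\mathbb C[S]=\{\sum_{s\in S}c_ss\}\subseteq\mathbb C[G]$. The shape parameter is $\mathrm{sh}_G(S)=\frac{\#S}{\#G}\inf\left\{\frac{\sum_{\chi\in G^\vee}|f_\chi|}{|f_{\chi_0}|}: f\in\mathbb C[S],\ f_{\chi_0}\neq0\right\}$. Intervals: an interval of $\mathbb Z$ is a nonempty set $[n,m]\cap\mathbb Z$ with $n,m\in\mathbb R$. A standard interval of $\mathbb Z/n\mathbb Z$ is the image of an interval of $\mathbb Z$. In a finite abelian group $G$, a full interval is a set $\pi^{-1}(T)$ where $\pi:G\to\mathbb Z/n\mathbb Z$ is a surjective homomorphism ($n\ge1$) and $T$ a standard interval of $\mathbb Z/n\mathbb Z$; an interval of $G$ is a full interval of some subgroup of $G$. *)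

(* Defs.v *)
From HB Require Import structures.
From mathcomp Require Import all_boot all_order all_algebra all_fingroup all_solvable all_field all_character.
Set Implicit Arguments. Unset Strict Implicit. Unset Printing Implicit Defensive.
Import Order.TTheory GRing.Theory Num.Theory.

Local Open Scope ring_scope.

(* f = \sum_g c g * g is represented by its coefficient function c : gT -> algC.
   f_chi := \sum_(g in G) c g * chi (g^-1). *)
Definition fcoef (gT : finGroupType) (G : {group gT}) (c : gT -> algC)
    (chi : 'CF(G)) : algC :=
  \sum_(g in G) c g * chi (g^-1)%g.

Definition supported_in (gT : finGroupType) (S : {set gT}) (c : gT -> algC) : Prop :=
  forall g, g \notin S -> c g = 0.

(* The quantity (#S/#G) * (sum_{chi in G^vee} |f_chi|) / |f_chi0|, where
   G^vee = Hom(G, C^* ) is realised as the linear irreducible characters of G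
   and chi0 = 1 is the trivial character. *)
Definition shape_ratio (gT : finGroupType) (G : {group gT}) (S : {set gT})
    (c : gT -> algC) : algC :=
  (#|S|%:R / #|G|%:R) *
  (\sum_(i : Iirr G | 'chi[G]_i \is a linear_char) `|fcoef c 'chi[G]_i|) /
  `|fcoef c (1 : 'CF(G))|.

Definition in_std_interval (n : nat) (a b : int) (x : 'I_n.+1) : Prop :=
  exists k : int, (a <= k <= b) /\ (Posz (val x) = (k %% (n.+1)%:Z)%Z).

Definition full_interval (gT : finGroupType) (H : {group gT}) (S : {set gT}) : Prop :=
  exists (n : nat) (pi : gT -> 'I_n.+1) (a b : int),
    [/\ a <= b,
        {in H &, forall x y, pi (x * y)%g = pi x + pi y},
        (forall k : 'I_n.+1, exists2 x, x \in H & pi x = k) &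
        (forall x, x \in S <-> (x \in H /\ in_std_interval a b (pi x)))].

Definition is_interval (gT : finGroupType) (G : {group gT}) (S : {set gT}) : Prop :=
  exists2 H : {group gT}, H \subset G & full_interval H S.

(* Main.v *)
Require Import Defs.
From HB Require Import structures.
From mathcomp Require Import all_boot all_order all_algebra all_fingroup all_solvable all_field all_character.
From mathcomp Require Import zify ring.
Set Implicit Arguments. Unset Strict Implicit. Unset Printing Implicit Defensive.
Import Order.TTheory GRing.Theory Num.Theory.
Local Open Scope ring_scope.

Lemma abel_class (gT : finGroupType) (G : {group gT}) x y :
  abelian G -> x \in G -> y \in G -> (x \in y ^: G)%g = (x == y).
Proof.
move=> cGG Gx Gy; apply/idP/eqP=> [/imsetP[g Gg ->]|->]; last exact: class_refl.
by rewrite conjgE ((centsP cGG) y Gy g Gg) mulKg.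
Qed.

Lemma abel_cent (gT : finGroupType) (G : {group gT}) x :
  abelian G -> x \in G -> ('C_G[x])%g = G.
Proof.
move=> cGG Gx; apply/setIidPl; apply/subsetP=> g Gg; apply/cent1P.
exact: (centsP cGG) g Gg x Gx.
Qed.

Lemma parseval (gT : finGroupType) (G : {group gT}) (A : {set gT}) :
  abelian G -> A \subset G ->
  \sum_(i : Iirr G) `|\sum_(x in A) 'chi[G]_i (x^-1)%g| ^+ 2 = (#|G| * #|A|)%:R.
Proof.
move=> cGG sAG.
under eq_bigr => i _ do rewrite normCK rmorph_sum mulr_suml.
rewrite exchange_big /=.
rewrite natrM mulrC mulr_natl -sumr_const; apply: eq_bigr => x Ax.
have Gx : x \in G by apply: (subsetP sAG).
under eq_bigr => i _ do rewrite mulr_sumr.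
rewrite exchange_big /= (bigD1 x) //= [X in _ + X]big1; last first.
  move=> y /andP[Ay nyx].
  rewrite second_orthogonality_relation ?groupV //; last exact: (subsetP sAG).
  rewrite abel_class ?groupV //; last exact: (subsetP sAG).
  by rewrite (inj_eq invg_inj) eq_sym (negbTE nyx).
rewrite addr0 second_orthogonality_relation ?groupV //.
by rewrite abel_class ?groupV // eqxx abel_cent ?groupV.
Qed.
Lemma sum_eq1 (gT : finGroupType) (G : {set gT}) h (F : gT -> algC) :
  h \in G -> \sum_(g in G) ((g == h)%:R * F g) = F h.
Proof.
move=> Gh; rewrite (bigD1 h) //= eqxx mul1r [X in _ + X]big1 ?addr0 //.
by move=> g /andP[_ /negbTE->]; rewrite mul0r.
Qed.

Definition cc (gT : finGroupType) (A : {set gT}) (g0 : gT) (g : gT) : algC :=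
  \sum_(x in A) \sum_(y in A) ((g == (g0 * x * y)%g)%:R).

Lemma fcoef_cc (gT : finGroupType) (G : {group gT}) (A : {set gT}) g0 (chi : 'CF(G)) :
  A \subset G -> g0 \in G ->
  fcoef (cc A g0) chi = \sum_(x in A) \sum_(y in A) chi ((g0 * x * y)^-1)%g.
Proof.
move=> sAG Gg0; rewrite /fcoef /cc.
under eq_bigr => g _ do rewrite mulr_suml.
rewrite exchange_big /=; apply: eq_bigr => x Ax.
under eq_bigr => g _ do rewrite mulr_suml.
rewrite exchange_big /=; apply: eq_bigr => y Ay.
rewrite (sum_eq1 (fun g => chi (g^-1)%g)) //.
by rewrite !groupM // (subsetP sAG).
Qed.

Lemma key (gT : finGroupType) (G : {group gT}) (S A : {set gT}) (g0 : gT) :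
  abelian G -> A \subset G -> g0 \in G -> A != set0 ->
  (forall x y, x \in A -> y \in A -> (g0 * x * y)%g \in S) ->
  (#|S| <= 2 * #|A|)%N ->
  exists c : gT -> algC,
    [/\ supported_in S c, fcoef c (1 : 'CF(G)) != 0 & shape_ratio G S c <= 2].
Proof.
move=> cGG sAG Gg0 A0 AAS cardS; exists (cc A g0).
have f1 : fcoef (cc A g0) (1 : 'CF(G)) = (#|A| ^ 2)%:R.
  rewrite fcoef_cc //.
  rewrite (eq_bigr (fun _ => #|A|%:R)) => [|x Ax].
    by rewrite sumr_const -[LHS]mulr_natr -natrM mulnn.
  rewrite (eq_bigr (fun _ => 1 : algC)) => [|y Ay]; first by rewrite sumr_const.
  by rewrite cfun1E !groupV !groupM // (subsetP sAG).
have cA0 : (0 < #|A|)%N by rewrite card_gt0.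
split.
- move=> g gS; rewrite /cc big1 // => x Ax; rewrite big1 // => y Ay.
  by case: eqP => // eg; case/negP: gS; rewrite eg AAS.
- by rewrite f1 pnatr_eq0 -lt0n expn_gt0 cA0.
have flin i : `|fcoef (cc A g0) 'chi[G]_i| = `|\sum_(x in A) 'chi[G]_i (x^-1)%g| ^+ 2.
  have lin : 'chi[G]_i \is a linear_char by apply/(char_abelianP G).
  rewrite fcoef_cc //.
  have -> : \sum_(x in A) \sum_(y in A) 'chi[G]_i ((g0 * x * y)^-1)%g =
     'chi[G]_i (g0^-1)%g * ((\sum_(x in A) 'chi[G]_i (x^-1)%g) * (\sum_(x in A) 'chi[G]_i (x^-1)%g)).
    rewrite mulr_suml mulr_sumr; apply: eq_bigr => x Ax.
    rewrite mulr_sumr mulr_sumr; apply: eq_bigr => y Ay.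
    have Gx : x \in G by apply: (subsetP sAG).
    have Gy : y \in G by apply: (subsetP sAG).
    have Gxi : (x^-1 \in G)%g by rewrite groupV.
    have Gyi : (y^-1 \in G)%g by rewrite groupV.
    have Ggi : (g0^-1 \in G)%g by rewrite groupV.
    rewrite !invMg !lin_charM ?groupM //.
    by rewrite [LHS]mulrC -mulrA mulrCA.
  by rewrite normrM normC_lin_char ?groupV // mul1r normrM expr2.
rewrite /shape_ratio f1.
rewrite (eq_bigl (fun _ => true)); last by move=> i; apply/(char_abelianP G).
under eq_bigr => i _ do rewrite flin.
rewrite parseval // normr_nat.
have G0 : (#|G|%:R : algC) != 0 by rewrite pnatr_eq0 -lt0n cardG_gt0.
have A0' : (#|A|%:R : algC) != 0 by rewrite pnatr_eq0 -lt0n.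
rewrite natrM natrX expr2.
have -> : (#|S|%:R / #|G|%:R * (#|G|%:R * #|A|%:R) / (#|A|%:R * #|A|%:R) : algC) = #|S|%:R / #|A|%:R.
  by field; rewrite G0 A0'.
rewrite ler_pdivrMr ?ltr0n //.
by rewrite -(ler_nat algC) natrM in cardS.
Qed.

Lemma valD n (p q : 'I_n.+1) :
  ((val (p + q))%:Z = ((val p)%:Z + (val q)%:Z) %% (n.+1)%:Z)%Z.
Proof.
change (val (p + q)) with ((val p + val q) %% n.+1)%N.
by rewrite -modz_nat PoszD.
Qed.

Lemma valN n (p : 'I_n.+1) :
  ((val (- p))%:Z = (- (val p)%:Z) %% (n.+1)%:Z)%Z.
Proof.
change (val (- p)) with ((n.+1 - val p) %% n.+1)%N.
rewrite -modz_nat -subzn; last exact: ltnW (ltn_ord p).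
by rewrite modzDl.
Qed.

Lemma modzNl (x y d : int) : ((- (x %% d)%Z) + y = - x + y %[mod d])%Z.
Proof. by rewrite -modzDml modzNm modzDml. Qed.

Lemma ord_of_int n (z : int) : exists o : 'I_n.+1, (val o)%:Z = (z %% (n.+1)%:Z)%Z.
Proof.
have h0 : (0 <= (z %% (n.+1)%:Z)%Z) by rewrite modz_ge0.
have h1 : ((z %% (n.+1)%:Z)%Z < (n.+1)%:Z) by rewrite ltz_pmod.
exists (inord `|(z %% (n.+1)%:Z)%Z|%N).
rewrite /= inordK ?gez0_abs //.
by rewrite -ltz_nat gez0_abs.
Qed.

Lemma interval_key (gT : finGroupType) (G H : {group gT}) (S : {set gT}) n
  (pi : gT -> 'I_n.+1) (a b : int) (m : nat) :
  abelian G -> H \subset G ->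
  {in H &, forall x y, pi (x * y)%g = pi x + pi y} ->
  (forall k : 'I_n.+1, exists2 x, x \in H & pi x = k) ->
  (forall x, x \in S <-> (x \in H /\ in_std_interval a b (pi x))) ->
  (0 < m <= n.+1)%N ->
  (((n.+1)%:Z <= b - a + 1 /\ m = n.+1) \/
   (b - a + 1 < (n.+1)%:Z /\ b - a + 1 <= 2 * m%:Z <= b - a + 2)) ->
  exists c : gT -> algC,
    [/\ supported_in S c, fcoef c (1 : 'CF(G)) != 0 & shape_ratio G S c <= 2].
Proof.
move=> cGG sHG hom surj hS hm.
set N : int := (n.+1)%:Z => hcase.
have N0 : (0 < N) by [].
have pi1 : pi 1%g = 0.
  have e := hom 1%g 1%g (group1 H) (group1 H); rewrite mulg1 in e.
  by apply: (addrI (pi 1%g)); rewrite addr0 -e.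
have piV x : x \in H -> pi (x^-1)%g = - pi x.
  by move=> Hx; apply/eqP; rewrite -addr_eq0 -hom ?groupV // mulVg pi1.
have [o0 eo0] := ord_of_int n a.
have [o1 eo1] := ord_of_int n (a + m%:Z).
have [g0 Hg0 pg0] := surj o0.
have [g1 Hg1 pg1] := surj o1.
pose A := [set x in H | (val (pi x) < m)%N].
have sAH : A \subset H by apply/subsetP=> x; rewrite inE => /andP[].
have sAG : A \subset G := subset_trans sAH sHG.
apply: (key (g0 := g0) cGG sAG (subsetP sHG _ Hg0)).
- apply/set0Pn; exists 1%g; rewrite inE group1 pi1 /=.
  by case/andP: hm.
- move=> x y; rewrite !inE => /andP[Hx ltx] /andP[Hy lty].
  apply/hS; split; first by rewrite !groupM.
  set u : int := (val (pi x))%:Z; set v : int := (val (pi y))%:Z.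
  exists (a + ((u + v) %% N)%Z); split.
    have r0 : 0 <= ((u + v) %% N)%Z by rewrite modz_ge0.
    have r1 : ((u + v) %% N)%Z < N by rewrite ltz_pmod.
    have hu : 0 <= u < m%:Z by rewrite /u ltz_nat ltx.
    have hv : 0 <= v < m%:Z by rewrite /v ltz_nat lty.
    case: hcase => [[hN em]|[hN hl]].
      clearbody N; move: r0 r1; set r := ((u + v) %% N)%Z; clearbody r.
      move=> r0 r1; apply/andP; split; lia.
    have -> : ((u + v) %% N)%Z = u + v.
      by apply: modz_small; apply/andP; split; clearbody N; lia.
    apply/andP; split; clearbody N; lia.
  rewrite !hom ?groupM // !valD pg0 eo0 -/N -/u -/v.
  by rewrite modzDml -addrA modzDml modzDmr.
have cov : S \subset ((g0 *: A)%g :|: (g1 *: A)%g).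
  apply/subsetP=> x /hS [Hx [k [/andP[ak kb] ek]]].
  have e0 : ((val (pi (g0^-1 * x)%g))%:Z = (- a + k) %% N)%Z.
    by rewrite hom ?groupV // piV // valD valN ek pg0 eo0 modzDml modzDmr modzNl.
  have e1 : ((val (pi (g1^-1 * x)%g))%:Z = (- (a + m%:Z) + k) %% N)%Z.
    by rewrite hom ?groupV // piV // valD valN ek pg1 eo1 modzDml modzDmr modzNl.
  rewrite inE; apply/orP.
  case: hcase => [[hN em]|[hN hl]].
    left; apply/lcosetP; exists (g0^-1 * x)%g; last by rewrite mulKVg.
    by rewrite inE groupM ?groupV // em ltn_ord.
  have : (0 <= - a + k < N) by apply/andP; split; clearbody N; lia.
  move/modz_small => e0'; rewrite e0' in e0.
  have [dm|dm] := boolP (- a + k < m%:Z).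
    left; apply/lcosetP; exists (g0^-1 * x)%g; last by rewrite mulKVg.
    by rewrite inE groupM ?groupV // -ltz_nat e0.
  right; apply/lcosetP; exists (g1^-1 * x)%g; last by rewrite mulKVg.
  have : (0 <= - (a + m%:Z) + k < N).
    apply/andP; split; clearbody N; move: dm; rewrite -leNgt; lia.
  move/modz_small => e1'; rewrite e1' in e1.
  rewrite inE groupM ?groupV // -ltz_nat e1.
  move: dm; rewrite -leNgt; clearbody N; lia.
apply: leq_trans (subset_leq_card cov) _.
by rewrite cardsU !card_lcoset mul2n -addnn leq_subr.
Qed.

Unset Implicit Arguments.
Theorem lemma3p5 (gT : finGroupType) (G : {group gT}) (S : {set gT}) :
  abelian G -> is_interval G S ->
  forall eps : algC, 0 < eps ->
  exists c : gT -> algC,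
    [/\ supported_in S c, fcoef c (1 : 'CF(G)) != 0 & shape_ratio G S c <= 2 + eps].
Proof.
move=> cGG [H sHG [n [pi [a [b [ab hom surj hS]]]]]] eps eps0.
suff [c [h1 h2 h3]] : exists c : gT -> algC,
    [/\ supported_in S c, fcoef c (1 : 'CF(G)) != 0 & shape_ratio G S c <= 2].
  exists c; split => //; apply: le_trans h3 _.
  by rewrite lerDl ltW.
have [hN|hN] := boolP ((n.+1)%:Z <= b - a + 1).
  apply: (interval_key (m := n.+1) cGG sHG hom surj hS) => //.
  - by rewrite ltn0Sn leqnn.
  - by left.
rewrite -ltNge in hN.
pose l := absz (b - a + 1).
have el : (l%:Z = b - a + 1) by rewrite /l gez0_abs //; lia.
apply: (interval_key (m := (l.+1 %/ 2)%N) cGG sHG hom surj hS).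
  apply/andP; split.
    have : (0 < l)%N by rewrite -ltz_nat el; lia.
    lia.
  have : (l < n.+1)%N by rewrite -ltz_nat el.
  lia.
right; split => //; rewrite -el.
apply/andP; split; lia.
Qed.
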